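(* Let $g(x,\omega)=c_1\chi\omega(1-\omega)(\bar r\,\bar\tau(x))^2+c_2(1-\omega)\bar r\,\bar\tau(x)+\bar r\alpha$, and define $R_\tau(\omega,x)=(1-2\omega)\bar r\,\bar\tau(x)$, $R_c=\dfrac{c_2}{c_1\chi}$, $\omega_i=\dfrac12-\dfrac{c_2(\tau_D-\tau_C)}{2c_1\lambda_0\tau_i\chi}$ for $i\in\{C,D\}$, and $\tilde x(\omega)=\dfrac{\tau_D}{\tau_D-\tau_C}-\dfrac{c_2}{c_1\lambda_0\chi(1-2\omega)}$. Then: (a) if $R_\tau(0,0)<R_c$, then $\partial g/\partial\omega<0$ for all $x\in(0,1)$ and all $\omega\in(0,1)$; (b) if $R_\tau(0,1)<R_c<R_\tau(0,0)$, then (1) for $\omega\in(0,\omega_D)$: $\partial g/\partial\omega>0$ for $x\in(0,\tilde x(\omega))$ and $\partial g/\partial\omega<0$ for $x\in(\tilde x(\omega),1)$; (2) for $\omega\in(\omega_D,1)$: $\partial g/\partial\omega<0$ for all $x\in(0,1)$; (c) if $R_\tau(0,1)>R_c$, then (1) for $\omega\in(0,\omega_C)$: $\partial g/\partial\omega>0$ for all $x\in(0,1)$; (2) for $\omega\in(\omega_C,\omega_D)$: $\partial g/\partial\omega>0$ for $x\in(0,\tilde x(\omega))$ and $\partial g/\partial\omega<0$ for $x\in(\tilde x(\omega),1)$; (3) for $\omega\in(\omega_D,1)$: $\partial g/\partial\omega<0$ for all $x\in(0,1)$.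
   Context: Parameters: $\lambda_0>0$, $\tau_D>\tau_C\ge 0$, $\alpha\in[0,1]$, $\sigma\in[0,1)$, $\gamma\in[0,1)$, $d>0$, $c_1>0$, $c_2\ge 0$. $\bar\tau(x)=\tau_Cx+\tau_D(1-x)$, $\bar r=\lambda_0/(\tau_D-\tau_C)$, $\chi=(d/(1-\sigma))^{1/(1-\gamma)}$. *)

(* Defs.v *)
From Stdlib Require Import Reals Lra.
From Coquelicot Require Import Coquelicot.
Open Scope R_scope.

Definition tau_bar (tauC tauD x : R) : R := tauC * x + tauD * (1 - x).

Definition r_bar (lambda0 tauC tauD : R) : R := lambda0 / (tauD - tauC).

Definition chi (d sigma gamma : R) : R := Rpower (d / (1 - sigma)) (1 / (1 - gamma)).

Definition g (lambda0 tauC tauD alpha sigma gamma d c1 c2 : R) (x omega : R) : R :=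
  let rt := r_bar lambda0 tauC tauD * tau_bar tauC tauD x in
  c1 * chi d sigma gamma * omega * (1 - omega) * rt ^ 2
  + c2 * (1 - omega) * rt + r_bar lambda0 tauC tauD * alpha.

Definition dg_domega (lambda0 tauC tauD alpha sigma gamma d c1 c2 : R) (x omega : R) : R :=
  Derive (fun w => g lambda0 tauC tauD alpha sigma gamma d c1 c2 x w) omega.

Definition R_tau (lambda0 tauC tauD : R) (omega x : R) : R :=
  (1 - 2 * omega) * r_bar lambda0 tauC tauD * tau_bar tauC tauD x.

Definition R_c (sigma gamma d c1 c2 : R) : R := c2 / (c1 * chi d sigma gamma).

Definition omega_i (lambda0 tauC tauD sigma gamma d c1 c2 : R) (taui : R) : R :=
  / 2 - c2 * (tauD - tauC) / (2 * c1 * lambda0 * taui * chi d sigma gamma).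

Definition x_tilde (lambda0 tauC tauD sigma gamma d c1 c2 : R) (omega : R) : R :=
  tauD / (tauD - tauC) - c2 / (c1 * lambda0 * chi d sigma gamma * (1 - 2 * omega)).

(* Main.v *)
Require Import Defs.
From Stdlib Require Import Reals Lra.
From Coquelicot Require Import Coquelicot.
Open Scope R_scope.
Lemma dg_eq l tC tD al s ga d c1 c2 x w :
  dg_domega l tC tD al s ga d c1 c2 x w =
  let rt := r_bar l tC tD * tau_bar tC tD x in
  rt * (c1 * chi d s ga * (1 - 2*w) * rt - c2).
Proof.
  unfold dg_domega, g. simpl. apply is_derive_unique. auto_derive; auto. ring.
Qed.
Lemma chi_pos d s ga : 0 < chi d s ga.
Proof. unfold chi, Rpower. apply exp_pos. Qed.

Theorem proposition4
  (lambda0 tauC tauD alpha sigma gamma d c1 c2 : R)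
  (Hl : 0 < lambda0) (HtC : 0 <= tauC) (HtCD : tauC < tauD)
  (Ha : 0 <= alpha <= 1) (Hs : 0 <= sigma < 1) (Hg : 0 <= gamma < 1)
  (Hd : 0 < d) (Hc1 : 0 < c1) (Hc2 : 0 <= c2) :
  let dg := dg_domega lambda0 tauC tauD alpha sigma gamma d c1 c2 in
  let Rt := R_tau lambda0 tauC tauD in
  let Rc := R_c sigma gamma d c1 c2 in
  let wC := omega_i lambda0 tauC tauD sigma gamma d c1 c2 tauC in
  let wD := omega_i lambda0 tauC tauD sigma gamma d c1 c2 tauD in
  let xt := x_tilde lambda0 tauC tauD sigma gamma d c1 c2 in
  (* (a) *)
  (Rt 0 0 < Rc ->
     forall x w, 0 < x < 1 -> 0 < w < 1 -> dg x w < 0)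
  /\
  (* (b) *)
  (Rt 0 1 < Rc < Rt 0 0 ->
     (forall w, 0 < w < wD ->
        (forall x, 0 < x < xt w -> 0 < dg x w) /\
        (forall x, xt w < x < 1 -> dg x w < 0))
     /\
     (forall w, wD < w < 1 -> forall x, 0 < x < 1 -> dg x w < 0))
  /\
  (* (c) *)
  (Rc < Rt 0 1 ->
     (forall w, 0 < w < wC -> forall x, 0 < x < 1 -> 0 < dg x w)
     /\
     (forall w, wC < w < wD ->
        (forall x, 0 < x < xt w -> 0 < dg x w) /\
        (forall x, xt w < x < 1 -> dg x w < 0))
     /\
     (forall w, wD < w < 1 -> forall x, 0 < x < 1 -> dg x w < 0)).
Proof.
  intros dg Rt Rc wC wD xt.
  pose proof (chi_pos d sigma gamma) as Hchi.
  set (K := c1 * chi d sigma gamma).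
  assert (HK : 0 < K) by (apply Rmult_lt_0_compat; lra).
  set (T := tauD - tauC).
  assert (HT : 0 < T) by (unfold T; lra).
  set (r := lambda0 / T).
  assert (Hr : 0 < r) by (unfold r; apply Rdiv_lt_0_compat; lra).
  assert (HRc : Rc * K = c2) by (unfold Rc, R_c, K; field; lra).
  assert (HRc0 : 0 <= Rc).
  { unfold Rc, R_c. apply Rmult_le_pos; [lra|]. left; apply Rinv_0_lt_compat; exact HK. }
  assert (HRt : forall w x, Rt w x = (1 - 2*w) * r * (tauD - T * x)).
  { intros; unfold Rt, R_tau, tau_bar, r, r_bar, T; ring. }
  assert (Hdg : forall x w, dg x w = r * (tauD - T*x) * K * ((1-2*w) * r * (tauD - T*x) - Rc)).
  { intros x w. unfold dg. rewrite dg_eq. simpl. unfold tau_bar.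
    rewrite <- HRc. unfold r_bar, r, K, T. ring. }
  assert (Hpos : forall x w, x < 1 -> Rc < (1-2*w) * r * (tauD - T*x) -> 0 < dg x w).
  { intros x w Hx H. rewrite Hdg.
    assert (0 < tauD - T*x) by (assert (0 < T*(1-x)) by (apply Rmult_lt_0_compat; lra); unfold T in *; nra).
    apply Rmult_lt_0_compat; [|lra]. apply Rmult_lt_0_compat; [|lra].
    apply Rmult_lt_0_compat; lra. }
  assert (Hneg : forall x w, x < 1 -> (1-2*w) * r * (tauD - T*x) < Rc -> dg x w < 0).
  { intros x w Hx H. rewrite Hdg.
    assert (0 < tauD - T*x) by (assert (0 < T*(1-x)) by (apply Rmult_lt_0_compat; lra); unfold T in *; nra).
    assert (0 < r * (tauD - T * x) * K).
    { apply Rmult_lt_0_compat; [|lra]. apply Rmult_lt_0_compat; lra. }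
    nra. }
  assert (Hwi : forall ti w, 0 < ti ->
     (w < omega_i lambda0 tauC tauD sigma gamma d c1 c2 ti <-> Rc < (1 - 2*w) * r * ti) /\
     (omega_i lambda0 tauC tauD sigma gamma d c1 c2 ti < w <-> (1 - 2*w) * r * ti < Rc)).
  { intros ti w Hti.
    assert (HwD : omega_i lambda0 tauC tauD sigma gamma d c1 c2 ti = /2 - Rc / (2 * r * ti)).
    { unfold omega_i, Rc, R_c, r, T. field. repeat split; lra. }
    rewrite HwD. set (q := Rc / (2 * r * ti)).
    assert (Hq : q * (2 * r * ti) = Rc) by (unfold q; field; lra).
    assert (0 < 2*r*ti) by (apply Rmult_lt_0_compat; lra).
    split; split; intro; nra. }
  assert (HxtI : forall w x, w < /2 -> (x < xt w <-> Rc < (1-2*w) * r * (tauD - T*x)) /\ (xt w < x <-> (1-2*w) * r * (tauD - T*x) < Rc)).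
  { intros w x Hw. unfold xt, x_tilde. fold K. fold T.
    replace (c1 * lambda0 * chi d sigma gamma * (1 - 2 * w)) with (lambda0 * (1-2*w) * K) by (unfold K; ring).
    set (q := c2 / (lambda0 * (1 - 2 * w) * K)).
    assert (Hq : q * (lambda0 * (1-2*w)) = Rc).
    { unfold q. rewrite <- HRc. field. repeat split; lra. }
    assert (Ht : tauD / T * T = tauD) by (field; lra).
    assert (Hrr : r * T = lambda0) by (unfold r; field; lra).
    assert (0 < 1 - 2*w) by lra.
    set (u := tauD / T) in *.
    assert (HTr : 0 < T * r * (1-2*w)) by (apply Rmult_lt_0_compat; [apply Rmult_lt_0_compat|]; lra).
    assert (E : (u - q - x) * (T * r * (1-2*w)) = (1-2*w)*r*(u*T - T*x) - q*(r*T*(1-2*w))) by ring.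
    rewrite Ht, Hrr, Hq in E.
    split; split; intro.
    - assert (0 < (u - q - x) * (T * r * (1-2*w))) by (apply Rmult_lt_0_compat; lra).
      lra.
    - destruct (Rlt_or_le x (u - q)); auto.
      assert (0 <= (x - (u - q)) * (T * r * (1-2*w))) by (apply Rmult_le_pos; lra).
      assert (E2 : (x - (u - q)) * (T * r * (1-2*w)) = - ((u - q - x) * (T * r * (1-2*w)))) by ring.
      lra.
    - assert (0 < (x - (u - q)) * (T * r * (1-2*w))) by (apply Rmult_lt_0_compat; lra).
      assert (E2 : (x - (u - q)) * (T * r * (1-2*w)) = - ((u - q - x) * (T * r * (1-2*w)))) by ring.
      lra.
    - destruct (Rlt_or_le (u - q) x); auto.
      assert (0 <= (u - q - x) * (T * r * (1-2*w))) by (apply Rmult_le_pos; lra).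
      lra. }
  assert (Hhigh : forall w x, 0 < x < 1 -> (1 - 2*w) * r * tauD < Rc -> dg x w < 0).
  { intros w x Hx H. apply Hneg; [lra|].
    assert (0 < r * T * x) by (apply Rmult_lt_0_compat; [apply Rmult_lt_0_compat|]; lra).
    destruct (Rle_or_lt 0 (1 - 2*w)).
    - assert (0 <= (1-2*w) * (r*T*x)) by (apply Rmult_le_pos; lra).
      assert (E : (1 - 2*w) * r * (tauD - T*x) = (1 - 2*w) * r * tauD - (1-2*w) * (r*T*x)) by ring.
      lra.
    - assert (0 < r * (tauD - T*x)).
      { apply Rmult_lt_0_compat; [lra|]. assert (0 < T*(1-x)) by (apply Rmult_lt_0_compat; lra). unfold T in *; nra. }
      assert (0 < -(1-2*w) * (r * (tauD - T*x))) by (apply Rmult_lt_0_compat; lra).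
      assert (E : (1 - 2*w) * r * (tauD - T*x) = - (-(1-2*w) * (r * (tauD - T*x)))) by ring.
      lra. }
  assert (HtD : 0 < tauD) by lra.
  assert (Hmid : forall w, 0 < w < wD ->
        (forall x, 0 < x < xt w -> 0 < dg x w) /\
        (forall x, xt w < x < 1 -> dg x w < 0)).
  { intros w Hw. destruct (Hwi tauD w HtD) as [[H1 _] _]. specialize (H1 (proj2 Hw)).
    assert (0 < (1-2*w) * (r * tauD)) by (replace ((1-2*w) * (r * tauD)) with ((1 - 2*w) * r * tauD) by ring; lra).
    assert (0 < r * tauD) by (apply Rmult_lt_0_compat; lra).
    assert (Hw2 : w < /2).
    { destruct (Rlt_or_le w (/2)); auto.
      assert (0 <= (2*w - 1) * (r * tauD)) by (apply Rmult_le_pos; lra). nra. }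
    split; intros x Hx.
    - assert (Hv := proj1 (proj1 (HxtI w x Hw2)) (proj2 Hx)).
      rewrite Hdg.
      assert (0 < 1 - 2*w) by lra.
      assert (0 < r * (tauD - T*x)).
      { destruct (Rlt_or_le 0 (r * (tauD - T*x))); auto.
        assert (0 <= (1-2*w) * -(r * (tauD - T*x))) by (apply Rmult_le_pos; lra).
        assert (E : (1 - 2*w) * r * (tauD - T*x) = - ((1-2*w) * -(r * (tauD - T*x)))) by ring.
        lra. }
      apply Rmult_lt_0_compat; [|lra]. apply Rmult_lt_0_compat; lra.
    - apply Hneg; [lra|]. apply (proj2 (HxtI w x Hw2)); lra. }
  split; [|split].
  - intros H x w Hx Hw. rewrite HRt in H. apply Hhigh; [lra|].
    assert (0 < r * tauD) by (apply Rmult_lt_0_compat; lra).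
    assert (0 < w * (r * tauD)) by (apply Rmult_lt_0_compat; lra).
    lra.
  - intros H. split; [exact Hmid|].
    intros w Hw x Hx. apply Hhigh; [lra|]. apply (proj1 (proj2 (Hwi tauD w HtD))); exact (proj1 Hw).
  - intros H. rewrite HRt in H.
    assert (HtC' : 0 < tauC).
    { destruct HtC as [|E]; auto. replace ((1-2*0)*r*(tauD-T*1)) with (r*tauC) in H by (unfold T; ring). rewrite <- E in H. lra. }
    split; [|split].
    + intros w Hw x Hx. destruct (Hwi tauC w HtC') as [[H1 _] _]. specialize (H1 (proj2 Hw)).
      apply Hpos; [lra|].
      assert (0 < (1-2*w)).
      { destruct (Rlt_or_le 0 (1-2*w)); auto.
        assert (0 <= -(1-2*w) * (r * tauC)) by (apply Rmult_le_pos; [lra| left; apply Rmult_lt_0_compat; lra]). nra. }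
      assert (0 <= (1-2*w) * (r * (tauD - T*x - tauC))).
      { apply Rmult_le_pos; [lra|]. apply Rmult_le_pos; [lra|]. unfold T in *; nra. }
      assert (E : (1 - 2*w) * r * (tauD - T*x) = (1 - 2*w) * r * tauC + (1-2*w) * (r * (tauD - T*x - tauC))) by ring.
      lra.
    + intros w Hw. apply Hmid. split; [|lra].
      destruct (Hwi tauC w HtC') as [_ [H1 _]]. specialize (H1 (proj1 Hw)).
      destruct (Rlt_or_le 0 w); auto.
      assert (0 <= -w * (r*tauC)) by (apply Rmult_le_pos; [lra| left; apply Rmult_lt_0_compat; lra]).
      assert (HH : r*tauC = (1-2*0)*r*(tauD-T*1)) by (unfold T; ring).
      assert (E : (1 - 2*w) * r * tauC = r * tauC + 2 * (-w * (r*tauC))) by ring.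
      lra.
    + intros w Hw x Hx. apply Hhigh; [lra|]. apply (proj1 (proj2 (Hwi tauD w HtD))); exact (proj1 Hw).
Qed.
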